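(* Let $b:\mathbb R\to\mathbb R$ be an arbitrary function (bottom topography), and let $x$ be a grid function with $x_s\neq0$ and $x_t+\check x_t\neq0$ at every node, satisfying at every node the modified scheme $$x_{t\check t}-\alpha^2x_{s\bar s}+\Big(\frac{1}{\hat x_s\check x_s}\Big)_{\bar s}-\frac{b_t+\check b_t}{x_t+\check x_t}=0,$$ where $b$ also denotes the grid function $b(x(t,s))$, so that $b_t+\check b_t=\big(b(\hat x)-b(\check x)\big)/\tau$. Then at every node the discrete energy conservation law $$\Big(x_t^2+x_s^{-1}+\hat x_s^{-1}+\alpha^2x_s\hat x_s-\hat b-b\Big)_{\check t}+\Big((x_t^++\check x_t^+)\big((\hat x_s\check x_s)^{-1}-\alpha^2x_s\big)\Big)_{\bar s}=0$$ holds.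
   Context: Fix mesh steps $\tau>0$, $h>0$ and a constant $\alpha\in\mathbb R$. A grid function is a real-valued function $f=f(t,s)$ on the uniform orthogonal mesh $\{(n\tau,kh): n,k\in\mathbb Z\}$. Shifts: $\hat f=f(t+\tau,s)$, $\check f=f(t-\tau,s)$, $f^+=f_+=f(t,s+h)$, $f^-=f_-=f(t,s-h)$; a shift applied to a composite expression shifts the whole expression (e.g. $\hat x_s$ is $x_s$ evaluated at $(t+\tau,s)$, $\check x_t$ is $x_t$ evaluated at $(t-\tau,s)$, $x_t^+$ is $x_t$ evaluated at $(t,s+h)$, $\check x_t^+$ is $x_t$ evaluated at $(t-\tau,s+h)$, $\hat b=b(\hat x)$). Differences: $f_t=(\hat f-f)/\tau$, $f_{\check t}=(f-\check f)/\tau$, $f_s=(f_+-f)/h$, $f_{\bar s}=(f-f_-)/h$; iterated differences compose, e.g. $x_{t\check t}=(x_t)_{\check t}=(\hat x-2x+\check x)/\tau^2$ and $x_{s\bar s}=(x_s)_{\bar s}=(x_+-2x+x_-)/h^2$. *)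

(* Defs.v *)
From Stdlib Require Import Reals ZArith.
Open Scope R_scope.

(* A grid function: value at node (n tau, k h). *)
Definition grid := Z -> Z -> R.

Definition hat (f : grid) : grid := fun n k => f (n + 1)%Z k.
Definition chk (f : grid) : grid := fun n k => f (n - 1)%Z k.
Definition splus (f : grid) : grid := fun n k => f n (k + 1)%Z.
Definition sminus (f : grid) : grid := fun n k => f n (k - 1)%Z.

Definition d_t (tau : R) (f : grid) : grid := fun n k => (hat f n k - f n k) / tau.
Definition d_tb (tau : R) (f : grid) : grid := fun n k => (f n k - chk f n k) / tau.
Definition d_s (h : R) (f : grid) : grid := fun n k => (splus f n k - f n k) / h.
Definition d_sb (h : R) (f : grid) : grid := fun n k => (f n k - sminus f n k) / h.

Definition compose_grid (b : R -> R) (x : grid) : grid := fun n k => b (x n k).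

Definition scheme (tau h alpha : R) (b : R -> R) (x : grid) : grid :=
  fun n k =>
    d_tb tau (d_t tau x) n k
    - alpha ^ 2 * d_sb h (d_s h x) n k
    + d_sb h (fun n' k' => / (hat (d_s h x) n' k' * chk (d_s h x) n' k')) n k
    - (d_t tau (compose_grid b x) n k + chk (d_t tau (compose_grid b x)) n k)
      / (d_t tau x n k + chk (d_t tau x) n k).

Definition energy (tau h alpha : R) (b : R -> R) (x : grid) : grid :=
  fun n k =>
    (d_t tau x n k) ^ 2 + / d_s h x n k + / hat (d_s h x) n k
    + alpha ^ 2 * d_s h x n k * hat (d_s h x) n k
    - hat (compose_grid b x) n k - compose_grid b x n k.

Definition flux (tau h alpha : R) (x : grid) : grid :=
  fun n k =>
    (splus (d_t tau x) n k + splus (chk (d_t tau x)) n k)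
    * (/ (hat (d_s h x) n k * chk (d_s h x) n k) - alpha ^ 2 * d_s h x n k).

(* Main.v *)
Require Import Defs.
From Stdlib Require Import Reals ZArith Lra.
Open Scope R_scope.

Theorem mainTheorem9 (tau h alpha : R) (b : R -> R) (x : grid) :
  0 < tau -> 0 < h ->
  (forall n k : Z, d_s h x n k <> 0) ->
  (forall n k : Z, d_t tau x n k + chk (d_t tau x) n k <> 0) ->
  (forall n k : Z, scheme tau h alpha b x n k = 0) ->
  forall n k : Z,
    d_tb tau (energy tau h alpha b x) n k + d_sb h (flux tau h alpha x) n k = 0.
Proof.
  intros Ht Hh Hs Hd Hsch n k.
  assert (Hs' : forall n k, x n (k+1)%Z - x n k <> 0).
  { intros n0 k0 E. apply (Hs n0 k0). unfold d_s, splus. rewrite E. field. lra. }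
  assert (Hd' : x (n+1)%Z k - x (n-1)%Z k <> 0).
  { intro E. apply (Hd n k). unfold d_t, chk, hat.
    replace (n - 1 + 1)%Z with n by ring. field_simplify; [|lra].
    replace (x (n + 1)%Z k - x (n - 1)%Z k) with 0 by lra. field. lra. }
  rewrite <- (Rmult_0_l (d_t tau x n k + chk (d_t tau x) n k)).
  rewrite <- (Hsch n k).
  pose proof (Hs' n k). pose proof (Hs' (n+1)%Z k). pose proof (Hs' (n-1)%Z k).
  pose proof (Hs' n (k-1)%Z). pose proof (Hs' (n+1)%Z (k-1)%Z). pose proof (Hs' (n-1)%Z (k-1)%Z).
  unfold scheme, energy, flux, d_tb, d_t, d_sb, d_s, hat, chk, splus, sminus, compose_grid in *.
  repeat rewrite Z.sub_add in *; repeat rewrite Z.add_simpl_r in *.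
  field. repeat split; try lra.
Qed.
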